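(* Let $\mathbf i$ be a reduced expression of $w_0$ whose standard seed satisfies properties (A), (B) and (C). Then for every $j\in J_{ex}(\mathbf i)$, $$\beta_jP_{\mathrm{in}(j)}=\beta_{j_+(\mathbf i)}P_{\mathrm{out}(j)}.$$
   Context: $\mathfrak g$ is a complex simple Lie algebra of simply-laced type, vertex set $I=\{1,\dots,n\}$, Cartan entries $i\cdot j$, Weyl group with simple reflections $s_i$, longest element $w_0$, $N=\ell(w_0)$, fundamental weights $\omega_i$. $\overline D:\mathbb C[\mathsf N]\to\mathbb C(\alpha_1,\dots,\alpha_n)$ is the algebra morphism $\overline D(f)=\sum_{\mathbf j}(f,e_{j_1}\cdots e_{j_r})\big(\alpha_{j_1}(\alpha_{j_1}+\alpha_{j_2})\cdots(\alpha_{j_1}+\dots+\alpha_{j_r})\big)^{-1}$ ($\mathbb C[\mathsf N]$ identified with the graded dual of $U(\mathfrak n)$, $e_i$ Chevalley generators, $\alpha_i$ indeterminates). Positive roots are linear forms in the $\alpha_i$; $(\beta;P)$ = multiplicity of $\beta$ in $P$. For a reduced expression $\mathbf i$: $\beta_j=s_{i_1}\cdots s_{i_{j-1}}(\alpha_{i_j})$; $j_-(\mathbf i)=\max(\{l<j:i_l=i_j\}\cup\{0\})$; $j_+(\mathbf i)=\min(\{l>j:i_l=i_j\}\cup\{N+1\})$; $J_{ex}(\mathbf i)=\{j:j_+(\mathbf i)\le N\}$; $x_j=D(s_{i_1}\cdots s_{i_j}\omega_{i_j},\omega_{i_j})$ are the flag minors (cluster variables of the standard seed). The quiver $Q^{\mathbf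 i}$ on $\{1,\dots,N\}$ has an (ordinary) arrow $u\to v$ iff $i_u\cdot i_v=-1$ and $u<v<u_+<v_+$, and a (horizontal) arrow $u_+\to u$ for each $u\in J_{ex}$. For $j\in J_{ex}$ let $\mathrm{inord}(j)$ (resp. $\mathrm{outord}(j)$) be the set of sources (resp. targets) of ordinary arrows into (resp. out of) $j$; set $P_{\mathrm{in}(j)}:=P_{j_+}\prod_{l\in\mathrm{inord}(j)}P_l$ and $P_{\mathrm{out}(j)}:=P_{j_-}\prod_{l\in\mathrm{outord}(j)}P_l$ with $P_0:=1$. Properties: (A) $\overline D(x_j)=1/P_j$ with $P_j$ a product of positive roots, for all $j$; (B) $P_jP_{j_-}=\beta_j\prod_{l<j<l_+,\,i_l\cdot i_j=-1}P_l$ for all $j$, with $P_0=1$; (C) $(\beta_i;P_j)-(\beta_i;P_{j_+})\le1$ for all $j\in J_{ex}$, $1\le i\le N$. *)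

(* Defs.v *)
From HB Require Import structures.
From mathcomp Require Import all_boot all_order all_algebra all_field.
From mathcomp Require Import mpoly.
Set Implicit Arguments. Unset Strict Implicit. Unset Printing Implicit Defensive.
Import Order.TTheory GRing.Theory Num.Theory.
Local Open Scope ring_scope.

Section Defs.
Variable n : nat.

(* vectors of the root lattice: coordinates on the simple roots alpha_k *)
Definition rvec := {ffun 'I_n -> int}.

Definition cartan_ok (C : 'M[int]_n) : Prop :=
  (0 < n)%N /\
  [/\ (forall i, C i i = 2),
      (forall i j, C i j = C j i),
      (forall i j, i != j -> C i j = 0 \/ C i j = -1),
      (* connected Dynkin diagram (g simple) *)
      (forall S : {set 'I_n}, S != set0 -> S != setT ->
          exists a b, [/\ a \in S, b \notin S & C a b != 0]) &
      (* finite type: positive definite *)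
      (forall x : rvec, x != 0 ->
          0 < \sum_(a < n) \sum_(b < n) x a * C a b * x b)].

(* simple reflection s_i on the root lattice: s_i(v) = v - <v, alpha_i^vee> alpha_i *)
Definition sref (C : 'M[int]_n) (i : 'I_n) (v : rvec) : rvec :=
  [ffun k => v k - (if k == i then \sum_(m < n) v m * C m i else 0)].

Fixpoint wact (C : 'M[int]_n) (u : seq 'I_n) (v : rvec) : rvec :=
  if u is a :: u' then sref C a (wact C u' v) else v.

Definition srt (k : 'I_n) : rvec := [ffun m => (m == k)%:R].

Definition weq (C : 'M[int]_n) (u u' : seq 'I_n) : Prop :=
  forall v, wact C u v = wact C u' v.

Definition reduced (C : 'M[int]_n) (w : seq 'I_n) : Prop :=
  forall u, (size u < size w)%N -> ~ weq C u w.

(* w is a reduced expression of the longest element w0: w is reduced and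
   every Weyl group element has length <= size w *)
Definition reduced_w0 (C : 'M[int]_n) (w : seq 'I_n) : Prop :=
  reduced C w /\ forall u, exists u', (size u' <= size w)%N /\ weq C u' u.

Definition pos_root (C : 'M[int]_n) (b : rvec) : Prop :=
  (exists u k, b = wact C u (srt k)) /\ b != 0 /\ forall k, 0 <= b k.

(* ---------- combinatorics of the word (positions 1..N) ---------- *)
Definition Nw (w : seq 'I_n) := size w.
Definition letter (w : seq 'I_n) (l : nat) : option 'I_n := onth w l.-1.
Definition cdot (C : 'M[int]_n) (w : seq 'I_n) (a b : nat) : int :=
  match letter w a, letter w b with Some x, Some y => C x y | _, _ => 0 end.

Definition beta (C : 'M[int]_n) (w : seq 'I_n) (j : nat) : rvec :=
  match letter w j with Some k => wact C (take j.-1 w) (srt k) | None => 0 end.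

Definition jplus (w : seq 'I_n) (j : nat) : nat :=
  head (Nw w).+1 [seq l <- iota j.+1 (Nw w - j) | letter w l == letter w j].
Definition jminus (w : seq 'I_n) (j : nat) : nat :=
  last 0%N [seq l <- iota 1 j.-1 | letter w l == letter w j].

Definition Jex (w : seq 'I_n) (j : nat) : bool :=
  [&& (1 <= j)%N, (j <= Nw w)%N & (jplus w j <= Nw w)%N].

Definition ord_arrow (C : 'M[int]_n) (w : seq 'I_n) (u v : nat) : bool :=
  [&& (1 <= u <= Nw w)%N, (1 <= v <= Nw w)%N, cdot C w u v == -1,
      (u < v)%N, (v < jplus w u)%N & (jplus w u < jplus w v)%N].

Definition Poly := {mpoly algC[n]}.

(* a root as a linear form in the indeterminates alpha_1..alpha_n *)
Definition lin (b : rvec) : Poly := \sum_(k < n) ((b k)%:~R : algC) *: 'X_k.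

Definition Pz (P : nat -> Poly) (j : nat) : Poly := if j == 0%N then 1 else P j.

Definition pdvd (p q : Poly) : Prop := exists r, q = p * r.
Definition is_mult (b p : Poly) (m : nat) : Prop :=
  pdvd (b ^+ m) p /\ ~ pdvd (b ^+ m.+1) p.

Definition propA (C : 'M[int]_n) (w : seq 'I_n) (P : nat -> Poly) : Prop :=
  forall j, (1 <= j <= Nw w)%N ->
    exists s : seq rvec, (forall b, b \in s -> pos_root C b) /\
                         P j = \prod_(b <- s) lin b.

Definition propB (C : 'M[int]_n) (w : seq 'I_n) (P : nat -> Poly) : Prop :=
  forall j, (1 <= j <= Nw w)%N ->
    P j * Pz P (jminus w j) =
    lin (beta C w j) *
      \prod_(1 <= l < (Nw w).+1 | [&& (l < j)%N, (j < jplus w l)%N & cdot C w l j == -1]) P l.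

Definition propC (C : 'M[int]_n) (w : seq 'I_n) (P : nat -> Poly) : Prop :=
  forall j i, Jex w j -> (1 <= i <= Nw w)%N ->
    forall a b, is_mult (lin (beta C w i)) (P j) a ->
                is_mult (lin (beta C w i)) (P (jplus w j)) b ->
                (a - b <= 1)%N.

Definition Pin (C : 'M[int]_n) (w : seq 'I_n) (P : nat -> Poly) (j : nat) : Poly :=
  P (jplus w j) * \prod_(1 <= l < (Nw w).+1 | ord_arrow C w l j) P l.
Definition Pout (C : 'M[int]_n) (w : seq 'I_n) (P : nat -> Poly) (j : nat) : Poly :=
  Pz P (jminus w j) * \prod_(1 <= l < (Nw w).+1 | ord_arrow C w j l) P l.

End Defs.

(* Main.v *)
Require Import Defs.
From mathcomp Require Import all_boot all_order all_algebra all_field.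
From mathcomp Require Import mpoly zify ring.
Local Open Scope ring_scope.
Import GRing.Theory.

Lemma head_filter_iota (p : pred nat) k : forall a d,
  let x := head d [seq l <- iota a k | p l] in
  (x = d /\ forall l, (a <= l < a + k)%N -> ~~ p l) \/
  [/\ (a <= x < a + k)%N, p x & forall l, (a <= l < x)%N -> ~~ p l].
Proof.
elim: k => [|k IH] a d /=.
  by left; split=> // l; lia.
case pa: (p a) => /=.
  right; split=> //; first lia.
  by move=> l; lia.
have [[-> H]|[H1 H2 H3]] := IH a.+1 d.
  left; split=> // l Hl.
  case: (ltngtP l a) => [?|?|E]; [lia| |by subst; rewrite pa].
  apply: H; lia.
right; split=> //; first lia.
move=> l Hl; case: (ltngtP l a) => [?|?|E]; [lia| |by subst; rewrite pa].
apply: H3; lia.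
Qed.

Section S.
Variable n : nat.
Variable w : seq 'I_n.

Lemma jplus_spec j : (j <= Nw w)%N ->
  (jplus w j = (Nw w).+1 /\ forall l, (j < l <= Nw w)%N -> letter w l != letter w j) \/
  [/\ (j < jplus w j <= Nw w)%N, letter w (jplus w j) = letter w j &
      forall l, (j < l < jplus w j)%N -> letter w l != letter w j].
Proof.
move=> hj; rewrite /jplus.
have [[-> H]|[H1 H2 H3]] := head_filter_iota (fun l => letter w l == letter w j) (Nw w - j) j.+1 (Nw w).+1.
  left; split=> // l Hl; apply: H; lia.
right; split; first lia.
  by apply/eqP.
move=> l Hl; apply: H3; lia.
Qed.

Lemma jplus_gt j : (j <= Nw w)%N -> (j < jplus w j)%N.
Proof. by move=> hj; case: (jplus_spec j hj) => [[-> _]|[]]; lia. Qed.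

Lemma jplus_letter j : (j <= Nw w)%N -> (jplus w j <= Nw w)%N ->
  letter w (jplus w j) = letter w j.
Proof. by move=> hj; case: (jplus_spec j hj) => [[-> _]|[]]; first lia. Qed.

Lemma jminus_jplus j : (1 <= j <= Nw w)%N -> (jplus w j <= Nw w)%N ->
  jminus w (jplus w j) = j.
Proof.
move=> hj hp; case: (jplus_spec j ltac:(lia)) => [[E _]|[H1 H2 H3]]; first lia.
rewrite /jminus.
set m := jplus w j in H1 H2 H3 *.
have -> : m.-1 = (j.-1 + 1 + (m.-1 - j))%N by lia.
rewrite !iotaD !filter_cat.
have -> : [seq l <- iota (1 + (j.-1 + 1)) (m.-1 - j) | letter w l == letter w m] = [::].
  rewrite -(filter_pred0 (iota (1 + (j.-1 + 1)) (m.-1 - j))).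
  apply: eq_in_filter => l; rewrite mem_iota => Hl /=.
  apply/negbTE; rewrite H2; apply: H3; lia.
have -> : iota (1 + j.-1) 1 = [:: j] by rewrite /=; congr (_ :: _); lia.
by rewrite /= H2 eqxx cats0 last_cat.
Qed.
End S.
Lemma lin_neq0 n (b : rvec n) : b != 0 -> lin b != 0.
Proof.
apply: contraNneq => H; apply/eqP/ffunP => k.
have := congr1 (mcoeff U_(k)) H.
rewrite /lin mcoeff0 raddf_sum (bigD1 k) //= mcoeffZ mcoeffXU eqxx mulr1.
rewrite big1 ?addr0 => [|i /negbTE ne]; last by rewrite mcoeffZ mcoeffXU ne mulr0.
move/eqP; rewrite intr_eq0 => /eqP ->.
by rewrite ffunE.
Qed.

Lemma cdot_sym n (C : 'M[int]_n) w a b : (forall i j, C i j = C j i) ->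
  cdot C w a b = cdot C w b a.
Proof. by move=> Cs; rewrite /cdot; case: (letter w a); case: (letter w b). Qed.

Lemma cdot_congr n (C : 'M[int]_n) w a b b' : letter w b = letter w b' ->
  cdot C w a b = cdot C w a b'.
Proof. by rewrite /cdot => ->. Qed.

Lemma cdot_neq n (C : 'M[int]_n) w a b : (forall i, C i i = 2) ->
  cdot C w a b = -1 -> letter w a != letter w b.
Proof.
move=> Cd; rewrite /cdot; case: (letter w a) => [x|//]; case: (letter w b) => [y|//].
by move=> H; apply/eqP => -[E]; move: H; rewrite E Cd.
Qed.

Lemma mul_if (R : comNzRingType) (x : R) (A1 A2 B1 B2 : bool) :
  (A1 || A2) = (B1 || B2) -> ~~ (A1 && A2) -> ~~ (B1 && B2) ->
  (if A1 then x else 1) * (if A2 then x else 1) =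
  (if B1 then x else 1) * (if B2 then x else 1).
Proof. by case: A1; case: A2; case: B1; case: B2; rewrite //= ?mulr1 ?mul1r. Qed.

Theorem lemma6p3 (n : nat) (C : 'M[int]_n) (w : seq 'I_n) (P : nat -> {mpoly algC[n]}) :
  cartan_ok C ->
  reduced_w0 C w ->
  propA C w P -> propB C w P -> propC C w P ->
  forall j, Jex w j ->
    lin (beta C w j) * Pin C w P j = lin (beta C w (jplus w j)) * Pout C w P j.
Proof.
move=> [_ [Cd Cs _ _ _]] _ HA HB _ j /and3P [j1 jN jpN].
set N := Nw w in jN jpN *.
set jp := jplus w j in jpN *.
have jjp : (j < jp)%N by apply: jplus_gt.
have Ljp : letter w jp = letter w j by apply: jplus_letter.
have Pj0 : P j != 0.
  have [s [Hs ->]] := HA j ltac:(lia).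
  rewrite prodf_seq_neq0; apply/allP => b /Hs [_ [b0 _]] /=.
  exact: lin_neq0.
have E1 := HB jp ltac:(lia).
rewrite jminus_jplus ?j1 // /Pz (negbTE (_ : j != 0%N)) in E1; last lia.
have E2 := HB j ltac:(lia).
apply: (mulfI Pj0); rewrite /Pin /Pout.
set X := \prod_(1 <= l < N.+1 | ord_arrow C w l j) P l.
set Y := \prod_(1 <= l < N.+1 | ord_arrow C w j l) P l.
set S1 := \prod_(1 <= l < N.+1 | _) P l in E1.
set S0 := \prod_(1 <= l < N.+1 | _) P l in E2.
have key : S1 * X = S0 * Y.
  rewrite /S1 /S0 /X /Y [X in X * _ = _]big_mkcond [X in _ * X = _]big_mkcond [X in _ = X * _]big_mkcond [X in _ = _ * X]big_mkcond -!big_split /=.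
  apply: eq_big_nat => l Hl.
  have lN : (l <= N)%N by lia.
  rewrite /ord_arrow -/N (@cdot_congr _ C w l jp j) // (@cdot_sym _ C w j l) //.
  case E: (cdot C w l j == -1); last by apply: mul_if; rewrite ?andbF ?andFb ?andbF.
  have ne := @cdot_neq _ C w l j Cd (eqP E).
  have lj : l != j by apply: contraNneq ne => ->.
  have ljp : l != jp by apply: contraNneq ne => ->; rewrite Ljp.
  have llp : (l < jplus w l)%N by apply: jplus_gt.
  have lpjp : jplus w l != jp.
    apply: contraNneq ne => Eq.
    by rewrite -(@jplus_letter _ w l) // Eq ?Ljp // -Eq.
  apply: mul_if; lia.
transitivity (lin (beta C w j) * (P jp * P j) * X); first by ring.
rewrite E1.
transitivity (lin (beta C w (jplus w j)) * (P j * Pz P (jminus w j)) * Y); last by ring.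
rewrite E2.
transitivity (lin (beta C w j) * lin (beta C w jp) * (S1 * X)); first by ring.
by rewrite key; ring.
Qed.
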